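(* Let $I$ be a proper ideal of $\mathbb{C}[\mathrm{GL}_n]$ and $Y = V(I)$. For $P(t),Q(t)\in\mathrm{GL}_n(\mathcal{R})$ let $Y_{P(t),Q(t)} = V(\Psi_{P(t),Q(t)}(I))\subset(\overline{\mathcal{K}}^* )^n$. Then \[\mathrm{strop}(Y) = \overline{\bigcup_{(P(t),Q(t))\in\mathrm{GL}_n(\mathcal{R})\times\mathrm{GL}_n(\mathcal{R})}\mathrm{trop}(Y_{P(t),Q(t)})}.\]
   Context: $\mathbb{C}[\mathrm{GL}_n]$ is the ring of regular functions on $\mathrm{GL}_n(\mathbb{C})$. $\overline{\mathcal{K}}$ is the field of complex Puiseux series with valuation $\mathrm{val}(\sum a_qt^q) = \min\{q:a_q\ne0\}$; $\mathcal{R} = \{z:\mathrm{val}(z)\ge0\}$. For $f\in\mathbb{C}[\mathrm{GL}_n]$ and $P(t),Q(t)\in\mathrm{GL}_n(\mathcal{R})$, $\Psi_{P(t),Q(t)}(f)$ is the Laurent polynomial over $\overline{\mathcal{K}}$ given by $z(t)\mapsto f(P(t)\,\mathrm{diag}(z(t))\,Q(t)^{-1})$, and $\Psi_{P,Q}(I) = \{\Psi_{P,Q}(f):f\in I\}$; $V(\cdot)\subset(\overline{\mathcal{K}}^* )^n$ is the common zero set. For $Z\subset(\overline{\mathcal{K}}^* )^n$, $\mathrm{trop}(Z)$ is the closure in $\mathbb{R}^n$ of $\{(\mathrm{val}(z_1),\dots,\mathrm{val}(z_n)) : z\in Z\}$. Every $A(t)\in\mathrm{GL}_n(\overline{\mathcal{K}})$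 factors as $P(t)\,\mathrm{diag}(z(t))\,Q(t)^{-1}$ with $P,Q\in\mathrm{GL}_n(\mathcal{R})$, the multiset $\{\mathrm{val}(z_i(t))\}$ being independent of the choice; $\mathrm{sval}(A(t))$ is this multiset in $\mathbb{Q}^n/\mathcal{S}_n$. $Y(\overline{\mathcal{K}})$ is the set of $A(t)\in\mathrm{GL}_n(\overline{\mathcal{K}})$ on which all $f\in I$ vanish, and $\mathrm{strop}(Y)$ is the closure in $\mathbb{R}^n$ of the set of $x\in\mathbb{Q}^n$ whose $\mathcal{S}_n$-orbit equals $\mathrm{sval}(A(t))$ for some $A(t)\in Y(\overline{\mathcal{K}})$. *)

(* Defs.v *)
From HB Require Import structures.
From mathcomp Require Import all_boot all_order all_algebra.
From mathcomp Require Import reals.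
From mathcomp Require Import complex.
From mathcomp Require Import mpoly.
Set Implicit Arguments.
Unset Strict Implicit.
Unset Printing Implicit Defensive.
Import Order.TTheory GRing.Theory Num.Theory.
Local Open Scope ring_scope.

(* The coordinate ring C[GL_n] is presented as C[x_ij, y] / (det(x) y - 1). *)
(* An ideal of C[GL_n] is the same as an ideal J of C[x,y] containing      *)
(* det(x) y - 1; it is proper iff 1 \notin J.                              *)

Definition GLpoly (R : realType) (n : nat) := {mpoly R[i][n * n + 1]}.

Definition Xmat (R : realType) (n : nat) : 'M[GLpoly R n]_n :=
  \matrix_(i, j) 'X_(lshift 1 (mxvec_index i j)).

Definition Yvar (R : realType) (n : nat) : GLpoly R n :=
  'X_(rshift (n * n) (ord0 : 'I_1)).

Definition detrel (R : realType) (n : nat) : GLpoly R n :=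
  \det (Xmat R n) * Yvar R n - 1.

Definition is_ideal (A : comNzRingType) (J : A -> Prop) : Prop :=
  [/\ J 0, (forall p q, J p -> J q -> J (p + q)) & (forall r p, J p -> J (r * p))].

Definition glpoint (K : fieldType) (n : nat) (A : 'M[K]_n) : 'I_(n * n + 1) -> K :=
  fun k => match split k with
           | inl k' => mxvec A 0 k'
           | inr _ => (\det A)^-1
           end.

Definition evalGL (R : realType) (K : fieldType) (iota : {rmorphism R[i] -> K})
  (n : nat) (p : GLpoly R n) (A : 'M[K]_n) : K :=
  (map_mpoly iota p).@[glpoint A].

(* Valued field standing in for the complex Puiseux series.   *)
(* val : K -> rat, only meaningful on nonzero elements (val 0 = +oo).     *)
Definition puiseux_like_valuation (R : realType) (K : fieldType)
  (iota : {rmorphism R[i] -> K}) (val : K -> rat) : Prop :=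
  [/\ (forall x y : K, x != 0 -> y != 0 -> val (x * y) = val x + val y),
      (forall x y : K, x != 0 -> y != 0 -> x + y != 0 ->
          Num.min (val x) (val y) <= val (x + y)),
      (forall c : R[i], c != 0 -> val (iota c) = 0)
    & (forall q : rat, exists x : K, x != 0 /\ val x = q)].

(* the valuation ring R = {z : val z >= 0} (0 included, val 0 = +oo) *)
Definition inValRing (K : fieldType) (val : K -> rat) (x : K) : Prop :=
  x = 0 \/ 0 <= val x.

Definition inGLR (K : fieldType) (val : K -> rat) (n : nat) (M : 'M[K]_n) : Prop :=
  [/\ forall i j, inValRing val (M i j), \det M != 0 & inValRing val (\det M)^-1].

Definition diagz (K : fieldType) (n : nat) (z : 'I_n -> K) : 'M[K]_n :=
  diag_mx (\row_i z i).

Definition Ypoints (R : realType) (K : fieldType) (iota : {rmorphism R[i] -> K})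
  (n : nat) (J : GLpoly R n -> Prop) (A : 'M[K]_n) : Prop :=
  \det A != 0 /\ forall p, J p -> evalGL iota p A = 0.

(* Y_{P,Q} = V(Psi_{P,Q}(I)) in (K^x)^n : the Laurent polynomial
   Psi_{P,Q}(f) is z |-> f(P diag(z) Q^-1). *)
Definition YPQ (R : realType) (K : fieldType) (iota : {rmorphism R[i] -> K})
  (n : nat) (J : GLpoly R n -> Prop) (P Q : 'M[K]_n) (z : 'I_n -> K) : Prop :=
  (forall i, z i != 0) /\
  forall p, J p -> evalGL iota p (P *m diagz z *m invmx Q) = 0.

Definition Rclosure (R : realType) (n : nat) (S : ('I_n -> R) -> Prop)
  (x : 'I_n -> R) : Prop :=
  forall e : R, 0 < e -> exists y, S y /\ forall i, `|x i - y i| < e.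

Definition trop (R : realType) (K : fieldType) (val : K -> rat) (n : nat)
  (Z : ('I_n -> K) -> Prop) : ('I_n -> R) -> Prop :=
  Rclosure (fun y => exists z, Z z /\ forall i, y i = ratr (val (z i))).

(* q (a point of Q^n) has S_n-orbit equal to sval(A): the multiset of
   valuations of z in some factorization A = P diag(z) Q^-1, P,Q in GL_n(R)
   (this multiset is independent of the factorization). *)
Definition sval_is (K : fieldType) (val : K -> rat) (n : nat) (A : 'M[K]_n)
  (q : 'I_n -> rat) : Prop :=
  exists (P Q : 'M[K]_n) (z : 'I_n -> K),
    [/\ inGLR val P, inGLR val Q, (forall i, z i != 0),
        A = P *m diagz z *m invmx Q
      & perm_eq [seq val (z i) | i <- enum 'I_n] [seq q i | i <- enum 'I_n]].

Definition strop (R : realType) (K : fieldType) (iota : {rmorphism R[i] -> K})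
  (val : K -> rat) (n : nat) (J : GLpoly R n -> Prop) : ('I_n -> R) -> Prop :=
  Rclosure (fun y => exists q : 'I_n -> rat,
              (forall i, y i = ratr (q i)) /\
              exists A, Ypoints iota J A /\ sval_is val A q).

(* Main.v *)
Require Import Defs.
From HB Require Import structures.
From mathcomp Require Import all_boot all_order all_algebra.
From mathcomp Require Import reals.
From mathcomp Require Import complex.
From mathcomp Require Import mpoly.
From mathcomp Require Import lra fingroup perm.
Import Order.TTheory GRing.Theory Num.Theory.
Local Open Scope ring_scope.

Lemma sign_inValRing {R : realType} {K : fieldType}
  {iota : {rmorphism R[i] -> K}} {val : K -> rat}
  (hval : puiseux_like_valuation iota val) (b : bool) (x : K) :
  inValRing val x -> inValRing val ((-1) ^+ b * x).
Proof.
case: hval => hM _ hC _.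
case: (eqVneq x 0) => [->|nx0]; first by rewrite mulr0; left.
case=> [x0|hx]; first by rewrite x0 eqxx in nx0.
right.
have hs : ((-1) ^+ b : K) = iota ((-1) ^+ b) by rewrite rmorphXn rmorphN1.
have sne : ((-1) ^+ b : R[i]) != 0 by rewrite signr_eq0.
rewrite hM ?signr_eq0 // hs hC // add0r //.
Qed.

Lemma inGLR_perm {R : realType} {K : fieldType}
  {iota : {rmorphism R[i] -> K}} {val : K -> rat}
  (hval : puiseux_like_valuation iota val) (n : nat) (P : 'M[K]_n) (s : 'S_n) :
  inGLR val P -> inGLR val (P *m perm_mx s).
Proof.
case=> hE hD hI; split.
- move=> i j; rewrite -[s]invgK -col_permE mxE; exact: hE.
- by rewrite det_mulmx det_perm mulf_neq0 ?signr_eq0.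
- rewrite det_mulmx det_perm mulrC invr_signM.
  by apply: (sign_inValRing hval); exact: hI.
Qed.

Lemma invmx_mul (K : fieldType) (n : nat) (A B : 'M[K]_n) :
  A \in unitmx -> B \in unitmx -> invmx (A *m B) = invmx B *m invmx A.
Proof.
move=> uA uB.
have uAB : A *m B \in unitmx by rewrite unitmx_mul uA uB.
have h : (A *m B) *m (invmx B *m invmx A) = 1%:M.
  by rewrite -mulmxA (mulmxA B) mulmxV // mul1mx mulmxV.
by rewrite -[RHS](mulKmx uAB) h mulmx1.
Qed.

Lemma invmx_perm (K : fieldType) (n : nat) (s : 'S_n) :
  invmx (perm_mx s^-1) = perm_mx s :> 'M[K]_n.
Proof.
have h : perm_mx s^-1 *m perm_mx s = 1%:M :> 'M[K]_n.
  by rewrite -perm_mxM mulVg perm_mx1.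
by rewrite -[RHS](mulKmx (unitmx_perm _ s^-1)) h mulmx1.
Qed.

Lemma diag_perm (K : fieldType) (n : nat) (z : 'I_n -> K) (s : 'S_n) :
  diagz z = perm_mx s^-1 *m diagz (fun i => z (s i)) *m perm_mx s.
Proof.
rewrite -row_permE -[s in perm_mx s]invgK -col_permE.
apply/matrixP => i j; rewrite !mxE.
by rewrite permKV (inj_eq perm_inj).
Qed.

Lemma perm_from_eq (n : nat) (f : 'I_n -> rat) (q : 'I_n -> rat) :
  perm_eq [seq f i | i <- enum 'I_n] [seq q i | i <- enum 'I_n] ->
  exists s : 'S_n, forall i, q i = f (s i).
Proof.
rewrite perm_sym => h.
have ht : perm_eq [seq q i | i <- enum 'I_n] [tuple f i | i < n].
  by [].
case/perm.tuple_permP: ht => p hp; exists p => i.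
have : [tuple q i | i < n] = [tuple tnth [tuple f i | i < n] (p i) | i < n].
  apply: val_inj; move: hp => /= <-; by [].
by move/(congr1 (fun t => tnth t i)); rewrite !tnth_mktuple.
Qed.

Theorem mainTheorem17 (R : realType) (K : closedFieldType)
  (iota : {rmorphism R[i] -> K}) (val : K -> rat)
  (hval : puiseux_like_valuation iota val)
  (n : nat) (J : GLpoly R n -> Prop)
  (hJ : is_ideal J) (hdet : J (detrel R n)) (hproper : ~ J 1) :
  forall x : 'I_n -> R,
    strop iota val J x <->
    Rclosure (fun y => exists P Q : 'M[K]_n,
                [/\ inGLR val P, inGLR val Q & trop val (YPQ iota J P Q) y]) x.
Proof.
move=> x; split.
- move=> Hx e he.
  case: (Hx e he) => y [[q [Hyq [A [HA Hsv]]]] Hxy].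
  exists y; split => //.
  case: Hsv => P [Q [z [HP HQ Hz HAe Hpe]]].
  case: (@perm_from_eq _ _ _ Hpe) => s hs.
  exists (P *m perm_mx s^-1), (Q *m perm_mx s^-1); split.
  + exact: (inGLR_perm hval).
  + exact: (inGLR_perm hval).
  + move=> e' he'; exists y; split; last by move=> i; rewrite subrr normr0.
    exists (fun i => z (s i)); split; last by move=> i; rewrite Hyq hs.
    split; first by move=> i; exact: Hz.
    move=> p Jp.
    have uQ : Q \in unitmx by rewrite unitmxE unitfE; case: HQ.
    have -> : P *m perm_mx s^-1 *m diagz (fun i => z (s i)) *m
              invmx (Q *m perm_mx s^-1) = A.
      rewrite invmx_mul ?unitmx_perm // invmx_perm HAe (@diag_perm _ _ z s).
      by rewrite !mulmxA.
    by case: HA => _ ->.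
- move=> Hx e he.
  have he2 : 0 < e / 2 by rewrite divr_gt0.
  case: (Hx _ he2) => y [[P [Q [HP HQ Ht]]] Hxy].
  case: (Ht _ he2) => w [[z [[Hz Hev] Hwz]] Hyw].
  exists w; split.
  + exists (fun i => val (z i)); split => //.
    exists (P *m diagz z *m invmx Q); split.
    * split => //.
      rewrite !det_mulmx det_inv /diagz det_diag.
      case: HP => _ hP _; case: HQ => _ hQ _.
      rewrite !mulf_neq0 ?invr_eq0 //.
      by apply/prodf_neq0 => i _; rewrite mxE.
    * exists P, Q, z; split => //.
  + move=> i.
    apply: (le_lt_trans (ler_distD (y i) _ _)).
    have h1 := Hxy i; have h2 := Hyw i.
    lra.
Qed.
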